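(* Let $X$ be a topological space whose frame of open sets has a presentation $\mathcal{O}X=\langle G\mid R\rangle$, with quotient frame homomorphism $\overline{q}\colon\mathcal{O}(\Sigma^G)\to\mathcal{O}X$, and give $\mathcal{O}(\Sigma^G)$ and $\mathcal{O}X$ their Scott topologies. If $\overline{q}\times\mathrm{id}_X\colon\mathcal{O}(\Sigma^G)\times X\to\mathcal{O}X\times X$ is a quotient map of topological spaces, then $\mathcal{O}X$ with the Scott topology, together with the evaluation map $\mathrm{ev}\colon\mathcal{O}X\times X\to\Sigma$, $\mathrm{ev}(U,x)=\top\iff x\in U$, is the exponential $\Sigma^X$ in $\mathrm{Top}$.
   Context: $\Sigma$ is Sierpiński space $\{\bot,\top\}$ with $\{\top\}$ open. For a set $G$, $\mathcal{O}(\Sigma^G)$ denotes the free frame on $G$ (frames: complete lattices with finite meets distributing over arbitrary joins). A presentation $\mathcal{O}X=\langle G\mid R\rangle$ means the frame of opens of $X$ is the quotient of the free frame on $G$ by the congruence generated by $R$, with quotient homomorphism $\overline{q}$. Scott topology on a poset with directed joins: $V$ is open iff it is an upset and whenever the join of a directed set lies in $V$ some member of that set lies in $V$. One has a continuous map $\widetilde{\mathrm{ev}}\colon\mathcal{O}(\Sigma^G)\times X\to\Sigma$, $\widetilde{\mathrm{ev}}(m,x)=\top$ iff $x\in\overline{q}(m)$, which has the weak universal property: every continuous $h\colon A\times X\to\Sigma$ factors (not necessarily uniquely) as $\widetilde{\mathrm{ev}}\circ(h'\times X)$. *)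

(* Defs.v *)
From HB Require Import structures.
From mathcomp Require Import all_boot all_order.
From mathcomp Require Import boolp classical_sets topology function_spaces.

Set Implicit Arguments.
Unset Strict Implicit.
Unset Printing Implicit Defensive.
Local Open Scope classical_set_scope.

Section OrderNotions.
Variables (T : Type) (le : T -> T -> Prop).

Definition is_ub (D : set T) (u : T) := forall d, D d -> le d u.
Definition is_lb (D : set T) (u : T) := forall d, D d -> le u d.
Definition is_lub (D : set T) (s : T) :=
  is_ub D s /\ forall u, is_ub D u -> le s u.
Definition is_glb (D : set T) (m : T) :=
  is_lb D m /\ forall u, is_lb D u -> le u m.
Definition is_top (t : T) := forall u, le u t.

Definition directed (D : set T) :=
  (exists d, D d) /\
  forall a b, D a -> D b -> exists2 c, D c & le a c /\ le b c.

Definition scott_open (V : set T) :=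
  (forall x y, le x y -> V x -> V y) /\
  (forall D s, directed D -> is_lub D s -> V s -> exists2 d, D d & V d).

Lemma scott_openT : scott_open setT.
Proof. split=> // D s [[d Dd] _] _ _; by exists d. Qed.

Lemma scott_openI : setI_closed scott_open.
Proof.
move=> A B [uA dA] [uB dB]; split.
  by move=> x y xy [Ax Bx]; split; [exact: (uA x) | exact: (uB x)].
move=> D s Ddir sl [As Bs].
have [a Da Aa] := dA D s Ddir sl As.
have [b Db Bb] := dB D s Ddir sl Bs.
have [c Dc [ac bc]] := Ddir.2 a b Da Db.
by exists c => //; split; [exact: (uA a) | exact: (uB b)].
Qed.

Lemma scott_open_bigU (I : Type) (f : I -> set T) :
  (forall i, scott_open (f i)) -> scott_open (\bigcup_i f i).
Proof.
move=> fo; split.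
  by move=> x y xy [i _ fi_x]; exists i => //; apply: (fo i).1 fi_x.
move=> D s Ddir sl [i _ fi_s].
have [d Dd fi_d] := (fo i).2 D s Ddir sl fi_s.
by exists d => //; exists i.
Qed.
End OrderNotions.

(** * Sierpinski space: bool with {true} open. *)
Definition Sierp : Type := bool.
HB.instance Definition _ := Choice.copy Sierp bool.
Definition sierp_open (U : set Sierp) : Prop := U false -> U true.

Lemma sierp_openT : sierp_open setT. Proof. by []. Qed.
Lemma sierp_openI : setI_closed sierp_open.
Proof. by move=> A B hA hB [/hA ? /hB ?]. Qed.
Lemma sierp_open_bigU (I : Type) (f : I -> set Sierp) :
  (forall i, sierp_open (f i)) -> sierp_open (\bigcup_i f i).
Proof. by move=> fo [i _ fi]; exists i => //; apply: fo. Qed.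

HB.instance Definition _ :=
  isOpenTopological.Build Sierp sierp_openT sierp_openI sierp_open_bigU.

Definition opens (Y : topologicalType) : Type := {U : set Y | open U}.
HB.instance Definition _ (Y : topologicalType) := gen_eqMixin (opens Y).
HB.instance Definition _ (Y : topologicalType) := gen_choiceMixin (opens Y).

Definition opens_le (Y : topologicalType) (U V : opens Y) : Prop :=
  proj1_sig U `<=` proj1_sig V.

HB.instance Definition _ (Y : topologicalType) :=
  isOpenTopological.Build (opens Y) (@scott_openT _ (@opens_le Y))
    (@scott_openI _ (@opens_le Y)) (@scott_open_bigU _ (@opens_le Y)).

Definition SigmaPow (G : Type) : topologicalType := {ptws G -> Sierp}.
Definition freeFrame (G : Type) : topologicalType := opens (SigmaPow G).

Definition frame_hom (Y Z : topologicalType) (f : opens Y -> opens Z) : Prop :=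
  [/\ (forall t, is_top (@opens_le Y) t -> is_top (@opens_le Z) (f t)),
      (forall a b m, is_glb (@opens_le Y) [set a; b] m ->
                     is_glb (@opens_le Z) [set f a; f b] (f m)) &
      (forall (S : set (opens Y)) s, is_lub (@opens_le Y) S s ->
                     is_lub (@opens_le Z) (f @` S) (f s))].

Definition surjective (A B : Type) (f : A -> B) : Prop :=
  forall b, exists a, f a = b.

Definition frame_congruence (Y : topologicalType)
    (C : opens Y -> opens Y -> Prop) : Prop :=
  [/\ (forall a, C a a), (forall a b, C a b -> C b a),
      (forall a b c, C a b -> C b c -> C a c),
      (forall a a' b b' m m', C a a' -> C b b' ->
         is_glb (@opens_le Y) [set a; b] m ->
         is_glb (@opens_le Y) [set a'; b'] m' -> C m m') &
      (forall (I : Type) (f f' : I -> opens Y) s s',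
         (forall i, C (f i) (f' i)) ->
         is_lub (@opens_le Y) (range f) s ->
         is_lub (@opens_le Y) (range f') s' -> C s s')].

(** [q : O(Sigma^G) -> O X] exhibits O X = < G | R >: q is a surjective frame
    homomorphism whose kernel is the frame congruence generated by R. *)
Definition presentation (X : topologicalType) (G : Type)
    (R : set (freeFrame G * freeFrame G)) (q : freeFrame G -> opens X) : Prop :=
  [/\ frame_hom q, surjective q &
      forall m n, q m = q n <->
        (forall C, frame_congruence C -> (forall r, R r -> C r.1 r.2) -> C m n)].

Definition quotient_map (S T : topologicalType) (f : S -> T) : Prop :=
  surjective f /\ forall V : set T, open V <-> open (f @^-1` V).

Definition ev (X : topologicalType) (p : opens X * X) : Sierp :=
  `[< proj1_sig p.1 p.2 >].

Definition is_exponential (X E : topologicalType) (e : E * X -> Sierp) : Prop :=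
  continuous e /\
  forall (A : topologicalType) (h : A * X -> Sierp), continuous h ->
    exists! h' : A -> E, continuous h' /\ forall a x, e (h' a, x) = h (a, x).

(* Main.v *)
Require Import Defs.
From HB Require Import structures.
From mathcomp Require Import all_boot all_order.
From mathcomp Require Import boolp classical_sets topology function_spaces.
From Stdlib Require List.
Set Implicit Arguments.
Unset Strict Implicit.
Local Open Scope classical_set_scope.

Section Sig.
Variable G : Type.
Local Notation S := (SigmaPow G).
Definition Bs (s : list G) : set S := fun g => List.Forall (fun i => g i = true) s.
Definition Phi (f : S) : set_system S := fun P => exists s, Bs s f /\ Bs s `<=` P.

Lemma Phi_filter f : Filter (Phi f).
Proof.
split.
- by exists nil; split => // g _; constructor.
- move=> A B [s [fs sA]] [t [ft tB]]; exists (List.app s t); split.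
    by apply/List.Forall_app.
  by move=> g /List.Forall_app [gs gt]; split; [apply: sA|apply: tB].
- by move=> P Q PQ [s [fs sP]]; exists s; split => // g /sP/PQ.
Qed.

Lemma nbhs_Phi (f : S) : nbhs f `<=` Phi f.
Proof.
have := @cvg_sup _ G (fun i => Topological.class (initial_topology (fun f : (forall i, Sierp) => f i))) (Phi f) f (Phi_filter f).
move=> [_ H]; apply: H => i A.
rewrite nbhsE /= => -[B [oB Bf] BA].
move: oB; rewrite /open /=.
move=> [C oC CB]; subst B; apply: (@filterS _ _ (Phi_filter f) _ _ BA) => /=.
case fi: (f i).
- exists (cons i nil); split; first by constructor => //; constructor.
  by move=> g /List.Forall_cons_iff [gi _]; rewrite /preimage /= gi; move: Bf; rewrite /preimage /= fi.
- exists nil; split; first by constructor.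
  move=> g _; rewrite /preimage /=; move: Bf; rewrite /preimage /= fi => Cf.
  by move: (oC Cf); case: (g i).
Qed.

Lemma nbhs_coord (g : S) i : g i = true -> nbhs g [set h : S | h i = true].
Proof.
move=> gi.
have := @cvg_sup _ G (fun i => Topological.class (initial_topology (fun f : (forall i, Sierp) => f i))) (nbhs g) g _.
move=> [H _]; have := H (@cvg_id _ _) i; apply.
rewrite nbhsE /=; exists [set h : S | h i = true] => //; split => //.
exists [set true] => //; rewrite /open /= /sierp_open /=.
Qed.

Lemma Bs_open s : open (Bs s).
Proof.
rewrite openE => g gs; rewrite /interior.
elim: s gs => [|i s IH] gs.
  by apply: filterS (@filterT _ _ _) => h _; constructor.
move/List.Forall_cons_iff: gs => [gi gs].
apply: filterS (filterI (nbhs_coord gi) (IH gs)) => h [hi hs].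
by constructor.
Qed.

Lemma basis (m : set S) (f : S) : open m -> m f -> exists s, Bs s f /\ Bs s `<=` m.
Proof.
move=> om mf; apply: nbhs_Phi; apply: open_nbhs_nbhs; by split.
Qed.
End Sig.

Lemma opens_eq (Y : topologicalType) (u v : opens Y) :
  proj1_sig u = proj1_sig v -> u = v.
Proof.
case: u v => u ou [v ov] /= uv; subst v; congr exist; exact: Prop_irrelevance.
Qed.

Lemma lub_opens (Y : topologicalType) (S : set (opens Y)) s :
  is_lub (@opens_le Y) S s -> proj1_sig s = \bigcup_(u in S) proj1_sig u.
Proof.
move=> [ub lst].
have oV : open (\bigcup_(u in S) proj1_sig u).
  by apply: bigcup_open => u _; exact: (proj2_sig u).
apply/seteqP; split.
  apply: (lst (exist _ _ oV)) => d Sd y dy /=; by exists d.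
by move=> y [d Sd dy]; exact: (ub d Sd).
Qed.

Lemma q_mono (Y Z : topologicalType) (q : opens Y -> opens Z) u v :
  frame_hom q -> opens_le u v -> opens_le (q u) (q v).
Proof.
move=> [_ _ hl] uv.
have L : is_lub (@opens_le Y) [set u; v] v.
  split; first by move=> d [->|->] //.
  by move=> w ubw; apply: ubw; right.
have [ub _] := hl _ _ L.
by apply: ub; exists u => //; left.
Qed.

Lemma key_open (X : topologicalType) (G : Type) (q : freeFrame G -> opens X) :
  frame_hom q -> open [set p : freeFrame G * X | proj1_sig (q p.1) p.2].
Proof.
move=> fh; rewrite openE => -[m x] /= xqm.
pose Sb := [set u : freeFrame G | exists s, proj1_sig u = Bs s /\ Bs s `<=` proj1_sig m].
have Lm : is_lub (@opens_le _) Sb m.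
  split; first by move=> d [s [ds sm]]; rewrite /opens_le ds.
  move=> w ubw f mf.
  have [s [fs sm]] := basis (proj2_sig m) mf.
  by apply: (ubw (exist _ (Bs s) (Bs_open s))) => //; exists s.
have := lub_opens (let: And3 _ _ hl := fh in hl _ _ Lm).
move=> E; move: xqm; rewrite E => -[_ [u [s0 [us0 s0m]] <-] xqu].
pose O : set (freeFrame G) := [set m' | proj1_sig u `<=` proj1_sig m'].
have oO : open O.
  rewrite /open /=; split.
    by move=> a b ab ua; apply: subset_trans ab.
  move=> D s dir ls us.
  pose chi : SigmaPow G := fun i => `[< List.In i s0 >].
  have chis0 : Bs s0 chi.
    by apply/List.Forall_forall => i i0; apply/asboolP.
  have : proj1_sig s chi by apply: us; rewrite us0.
  rewrite (lub_opens ls) => -[d Dd dchi].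
  exists d => //.
  have [t [ct td]] := basis (proj2_sig d) dchi.
  rewrite /O /= us0 => g gs0; apply: td.
  apply/List.Forall_forall => i it.
  have := (List.Forall_forall _ _).1 ct i it => /asboolP ins0.
  exact: ((List.Forall_forall _ _).1 gs0 i ins0).
exists (O, proj1_sig (q u)).
  split; apply: open_nbhs_nbhs; split => //.
  - by rewrite /O /= us0.
  - exact: (proj2_sig (q u)).
case=> m' x' [/= Om' qx'].
exact: (q_mono fh Om').
Qed.

Lemma sierp_true_open : open [set true : Sierp].
Proof. by rewrite /open /= /sierp_open. Qed.

Lemma hsplit (A X : topologicalType) (h : A * X -> Sierp) :
  continuous h -> forall a x, h (a, x) = true ->
  exists N M, [/\ open N, N a, open M, M x &
    forall a' y, N a' -> M y -> h (a', y) = true].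
Proof.
move=> hc a x hax.
have := (continuousP _).1 hc _ sierp_true_open.
rewrite openE => /(_ (a, x) hax) -[[P Q] /= [Pa Qx] PQ].
move: Pa Qx; rewrite !nbhsE => -[N [oN Na] NP] [M [oM Mx] MQ].
exists N, M; split => // a' y Na' My.
by apply: (PQ (a', y)); split; [apply: NP | apply: MQ].
Qed.

Theorem mainTheorem5 (X : topologicalType) (G : Type)
  (R : set (freeFrame G * freeFrame G)) (q : freeFrame G -> opens X) :
  presentation R q ->
  quotient_map (fun p : freeFrame G * X => (q p.1, p.2)) ->
  is_exponential (@ev X).
Proof.
move=> [fh _ _] [_ fopen].
have key : open [set p : opens X * X | proj1_sig p.1 p.2].
  by apply/fopen; exact: key_open fh.
split.
  apply/continuousP => A oA.
  have [Af|nAf] := pselect (A false).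
    have -> : ev (X:=X) @^-1` A = setT.
      by apply/seteqP; split => // p _; rewrite /preimage /=; case: (ev p) => //; apply: oA.
    exact: openT.
  have [At|nAt] := pselect (A true).
    have -> : ev (X:=X) @^-1` A = [set p : opens X * X | proj1_sig p.1 p.2] => //.
    apply/seteqP; split => p; rewrite /preimage /= /ev.
      by case: asboolP => // _ /nAf.
    by move=> /asboolP ->.
  have -> : ev (X:=X) @^-1` A = set0; last exact: open0.
  by apply/seteqP; split => p //; rewrite /preimage /=; case: (ev p).
move=> A h hc.
have hopen : forall a, open [set x | h (a, x) = true].
  move=> a; rewrite openE => x hax.
  have [N [M [_ Na oM Mx NM]]] := hsplit hc hax.
  apply: (@filterS _ _ _ M); first by move=> y My; exact: NM.
  by apply: open_nbhs_nbhs.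
pose h' (a : A) : opens X := exist _ _ (hopen a).
have h'E : forall a x, ev (h' a, x) = h (a, x).
  move=> a x; rewrite /ev /=; case hx: (h (a, x)).
    by apply/asboolP.
  by apply/negbTE/asboolPn => /= hx'.
exists h'; split; first split => //.
  apply/continuousP => V oV; rewrite openE => a0 Va0.
  pose ON (N : set A) : set X := [set y | exists M, [/\ open M, M y &
     forall a' y', N a' -> M y' -> h (a', y') = true]].
  have oON : forall N, open (ON N).
    move=> N; rewrite openE => y [M [oM My NM]].
    apply: (@filterS _ _ _ M); first by move=> y' My'; exists M.
    by apply: open_nbhs_nbhs.
  pose D := [set u : opens X | exists N, [/\ open N, N a0 & proj1_sig u = ON N]].
  have dirD : directed (@opens_le X) D.
    split; first by exists (exist _ _ (oON setT)); exists setT; split => //; exact: openT.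
    move=> u1 u2 [N1 [oN1 N1a u1E]] [N2 [oN2 N2a u2E]].
    exists (exist _ _ (oON (N1 `&` N2))).
      by exists (N1 `&` N2); split => //; exact: openI.
    rewrite /opens_le u1E u2E /=; split => y [M [oM My NM]]; exists M; split => //.
      by move=> a' y' [Na' _]; exact: NM.
    by move=> a' y' [_ Na']; exact: NM.
  have lD : is_lub (@opens_le X) D (h' a0).
    split.
      move=> u [N [oN Na uE]]; rewrite /opens_le uE => y [M [oM My NM]] /=.
      exact: NM.
    move=> w ubw y /= hy.
    have [N [M [oN Na oM My NM]]] := hsplit hc hy.
    apply: (ubw (exist _ _ (oON N))); first by exists N.
    by exists M.
  have [d [N [oN Na dE]] Vd] := oV.2 D _ dirD lD Va0.
  apply: (@filterS _ _ _ N); last by apply: open_nbhs_nbhs.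
  move=> a Na'; apply: (oV.1 d) Vd.
  rewrite /opens_le dE => y [M [oM My NM]] /=; exact: NM.
move=> h'' [_ Eh''].
apply: funext => a; apply: opens_eq; apply/seteqP; split => x /=.
  by move=> hx; move: (Eh'' a x); rewrite hx /ev /= => /asboolP.
by move=> hx; rewrite -Eh'' /ev /=; apply/asboolP.
Qed.
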